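(* Let $T$ be a nonempty compact Hausdorff topological space and $\{f_t:\ t\in T\}$ a family of convex functions $f_t:X\to\mathbb{R}\cup\{+\infty\}$ (not necessarily lower semicontinuous) such that for each $z\in X$ the map $t\mapsto f_t(z)$ is upper semicontinuous on $T$. Let $f:=\sup_{t\in T}f_t$. Then \[ \operatorname{dom}f=\bigcap_{t\in T}\operatorname{dom}f_t, \] and for every $x\in\operatorname{dom}f$, \[ \mathbb{R}_+(\operatorname{dom}f-x)=\bigcap_{t\in T}\mathbb{R}_+(\operatorname{dom}f_t-x). \]
   Context: $X$ is a real separated locally convex space; $\operatorname{dom}g=\{x: g(x)<+\infty\}$; $\mathbb{R}_+A=\{\lambda a:\lambda\ge0, a\in A\}$. *)

(* Defs.v *)
From HB Require Import structures.
From mathcomp Require Import all_boot all_order all_algebra.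
From mathcomp Require Import all_classical all_reals all_analysis.
Set Implicit Arguments. Unset Strict Implicit. Unset Printing Implicit Defensive.
Import Order.TTheory GRing.Theory Num.Theory.
Local Open Scope classical_set_scope.
Local Open Scope ring_scope.

Definition convex_ext (R : realType) (X : lmodType R) (g : X -> \bar R) : Prop :=
  (forall x, g x != -oo%E) /\
  forall (x y : X) (l : R), 0 < l < 1 ->
    (g ((l *: x + (1 - l) *: y)%R) <= l%:E * g x + (1 - l)%:E * g y)%E.

Definition usc_ext (R : realType) (T : topologicalType) (h : T -> \bar R) : Prop :=
  forall c : R, open [set t | (h t < c%:E)%E].

Definition edom (R : realType) (X : Type) (g : X -> \bar R) : set X :=
  [set x | (g x < +oo)%E].

Definition cone_at (R : realType) (X : lmodType R) (A : set X) (x : X) : set X :=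
  [set y | exists l : R, 0 <= l /\ exists2 a, A a & y = l *: (a - x)].

Definition sup_fam (R : realType) (T X : Type) (F : T -> X -> \bar R) : X -> \bar R :=
  fun z => ereal_sup [set F t z | t in [set: T]].

(* Main.v *)
Require Import Defs.
From HB Require Import structures.
From mathcomp Require Import all_boot all_order all_algebra.
From mathcomp Require Import all_classical all_reals all_analysis.
Import Order.TTheory GRing.Theory Num.Theory.
Local Open Scope classical_set_scope.
Local Open Scope ring_scope.

Section Helpers.
Variables (R : realType) (X : lmodType R).

Lemma conv_fin (g : X -> \bar R) (a b : X) (l : R) :
  convex_ext g -> (g a < +oo)%E -> (g b < +oo)%E -> 0 <= l <= 1 ->
  (g (l *: a + (1 - l) *: b)%R < +oo)%E.
Proof.
move=> [gN gc] ga gb /andP[l0 l1].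
have [->|ln0] := eqVneq l 0.
  by rewrite scale0r add0r subr0 scale1r.
have [->|ln1] := eqVneq l 1.
  by rewrite subrr scale0r addr0 scale1r.
have hl : 0 < l < 1 by rewrite !lt_def ln0 l0 eq_sym ln1 l1.
apply: (le_lt_trans (gc a b l hl)).
move: (gN a) (gN b) ga gb.
case: (g a) => [ra| |] //; case: (g b) => [rb| |] // _ _ _ _.
by rewrite -!EFinM -EFinD ltry.
Qed.

Lemma seg_fin (g : X -> \bar R) (x w : X) (s s0 : R) :
  convex_ext g -> (g x < +oo)%E -> 0 < s0 -> (g (x + s0 *: w)%R < +oo)%E ->
  0 <= s <= s0 -> (g (x + s *: w)%R < +oo)%E.
Proof.
move=> gc gx s0p gs /andP[sge0 ss0].
have := @conv_fin g (x + s0 *: w) x (s / s0) gc gs gx.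
have -> : s / s0 *: (x + s0 *: w) + (1 - s / s0) *: x = x + s *: w.
  rewrite scalerDr scalerA mulfVK ?gt_eqF // scalerBl scale1r.
  by rewrite addrC addrA subrK.
apply; apply/andP; split; first exact: divr_ge0 (ltW s0p).
by rewrite ler_pdivrMr // mul1r.
Qed.

End Helpers.

Theorem lemma5 (R : realType) (X : tvsType R) (T : topologicalType)
  (F : T -> X -> \bar R) :
  hausdorff_space X ->
  [set: T] !=set0 -> compact [set: T] -> hausdorff_space T ->
  (forall t, convex_ext (F t)) ->
  (forall z : X, usc_ext (fun t => F t z)) ->
  edom (sup_fam F) = \bigcap_(t in [set: T]) edom (F t) /\
  (forall x, edom (sup_fam F) x ->
     cone_at (edom (sup_fam F)) x = \bigcap_(t in [set: T]) cone_at (edom (F t)) x).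
Proof.
move=> _ _ cT _ Fc Fu.
have cov := (compact_near_coveringP _).1 cT.
have realub : forall e : \bar R, (e < +oo)%E -> exists c : R, (e < c%:E)%E.
  move=> [r| |] //= _; first by exists (r + 1); rewrite lte_fin ltrDl.
  by exists 0; rewrite ltNyr.
have nearlt : forall z t (c : R), (F t z < c%:E)%E ->
    nbhs t [set t' | (F t' z < c%:E)%E].
  move=> z t c h; apply: open_nbhs_nbhs; split => //; exact: Fu.
have dom1 : forall z, (forall t, (F t z < +oo)%E) -> (sup_fam F z < +oo)%E.
  move=> z hz.
  have := cov nat \oo (fun n t => (F t z < n%:R%:E)%E) _.
  case.
  - move=> t _; have [c hc] := realub _ (hz t).
    exists ([set t' | (F t' z < c%:E)%E], [set n : nat | c < n%:R]).
      split; first exact: nearlt.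
      exists (Num.Def.truncn c).+1 => // n /= hn.
      by rewrite (lt_le_trans (truncnS_gt c)) // ler_nat.
    move=> [t' n] [/= h1 h2]; apply: (lt_trans h1); by rewrite lte_fin.
  move=> N _ HN.
    apply: (@le_lt_trans _ _ N%:R%:E); last exact: ltry.
    apply: ge_ereal_sup => _ [t _ <-]; apply: ltW; exact: (HN N (leqnn N) t).
have sub : forall z, (sup_fam F z < +oo)%E -> forall t, (F t z < +oo)%E.
  move=> z hz t; apply: le_lt_trans hz; apply: ereal_sup_ubound; by exists t.
split.
  apply/seteqP; split => z /=.
    move=> hz t _; exact: sub.
  move=> hz; apply: dom1 => t; exact: hz t I.
move=> x hx; apply/seteqP; split => y.
  move=> [l [l0 [a ha ->]]] t _; exists l; split => //; exists a => //; exact: sub.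
move=> hy.
have [->|y0] := eqVneq y 0.
  exists 0; split => //; exists x => //; by rewrite scale0r.
have key : forall t, exists n0 : nat, (F t (x + (n0.+1%:R)^-1 *: y)%R < +oo)%E.
  move=> t; have [l [l0 [a ha ey]]] := hy t I.
  have lp : 0 < l.
    rewrite lt_def l0 andbT; apply: contra_neq y0 => l0'.
    by rewrite ey l0' scale0r.
  exists (Num.Def.truncn l).
  rewrite ey scalerA.
  apply: (@seg_fin _ _ _ x (a - x) _ 1) => //.
  - exact: sub.
  - by rewrite scale1r addrC subrK.
  - apply/andP; split; first by rewrite mulr_ge0 // ?invr_ge0 // ltW.
    rewrite mulrC ler_pdivrMr ?ltr0Sn // mul1r.
    exact: ltW (truncnS_gt l).
have := cov nat \oo (fun n t => (F t (x + (n.+1%:R)^-1 *: y)%R < +oo)%E) _.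
case.
  move=> t _; have [n0 h0] := key t; have [c hc] := realub _ h0.
  exists ([set t' | (F t' (x + (n0.+1%:R)^-1 *: y)%R < c%:E)%E], [set n | (n0 <= n)%N]).
    split; first exact: nearlt.
    by exists n0.
  move=> [t' n] [/= h1 h2].
  apply: (@seg_fin _ _ _ x y _ (n0.+1%:R)^-1) => //.
  - exact: sub.
  - exact: (lt_trans h1 (ltry _)).
  - apply/andP; split; first by rewrite invr_ge0.
    by rewrite lef_pV2 ?posrE ?ltr0Sn // ler_nat ltnS.
move=> N _ HN.
exists N.+1%:R; split; first exact: ler0n.
exists (x + (N.+1%:R)^-1 *: y).
  apply: dom1 => t; exact: HN N (leqnn N) t I.
by rewrite (addrC x) addrK scalerA mulfV ?scale1r // pnatr_eq0.
Qed.
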